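(* Let $\mathfrak{s}_1=\langle e_1,e_2,e_3,e_4\rangle$ be the real Lie algebra with only nonzero brackets $[e_2,e_4]=-e_1$, $[e_3,e_4]=-e_3$. Write $r=x_1e_{12}+x_2e_{13}+x_3e_{14}+x_4e_{23}+x_5e_{24}+x_6e_{34}\in\Lambda^2\mathfrak{s}_1$, $e_{ij}=e_i\wedge e_j$. Then $(\Lambda^3\mathfrak{s}_1)^{\mathfrak{s}_1}=0$, $(\Lambda^2\mathfrak{s}_1)^{\mathfrak{s}_1}=\langle e_{12}\rangle$, and the set $\mathcal{Y}_{\mathfrak{s}_1}$ of $r$-matrices equals the set of solutions of the classical Yang–Baxter equation, given by $x_5=0$, $x_3x_4=0$, $x_3x_6=0$. The orbits of $\mathrm{Aut}(\mathfrak{s}_1)$ (acting by $r\mapsto\Lambda^2T(r)$) on $\mathcal{Y}_{\mathfrak{s}_1}$ are $\{0\}$ and the following sets (all unlisted coordinates being $0$): $\mathrm{I}_\pm:\ x_1\in\mathbb{R}_\pm$; $\mathrm{II}:\ x_2\neq0$; $\mathrm{III}_\pm:\ x_1\in\mathbb{R}_\pm,\ x_2\neq0$; $\mathrm{IV}:\ x_2\in\mathbb{R},\ x_4\neq0$; $\mathrm{V}_\pm:\ x_1\in\mathbb{R}_\pm,\ x_2\in\mathbb{R},\ x_4\neq0$; $\mathrm{VI}:\ x_1,x_2\in\mathbb{R},\ x_3\neq0$; $\mathrm{VII}:\ x_2,x_4\in\mathbb{R},\ x_6\neq0$; $\mathrm{VIII}_\pm:\ x_1\in\mathbb{R}_\pm,\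 x_2,x_4\in\mathbb{R},\ x_6\neq0$. Consequently, up to Lie algebra automorphisms of $\mathfrak{s}_1$ there are exactly five classes of coboundary cocommutators $\delta_r$, $r\in\mathcal{Y}_{\mathfrak{s}_1}$, corresponding to $r$ in $\{0\}\cup\mathrm{I}_+\cup\mathrm{I}_-$ (the zero cocommutator), $\mathrm{II}\cup\mathrm{III}_\pm$, $\mathrm{IV}\cup\mathrm{V}_\pm$, $\mathrm{VI}$, and $\mathrm{VII}\cup\mathrm{VIII}_\pm$, represented respectively by $r=0,\ e_{13},\ e_{23},\ e_{14},\ e_{34}$.
   Context: $[\cdot,\cdot]$ is the algebraic Schouten bracket on $\Lambda\mathfrak{s}_1$; $(\Lambda^m\mathfrak{g})^{\mathfrak{g}}=\{w:[v,w]=0\ \forall v\in\mathfrak{g}\}$. An $r$-matrix is $r\in\Lambda^2\mathfrak{g}$ with $[r,r]\in(\Lambda^3\mathfrak{g})^{\mathfrak{g}}$ (mCYBE); the CYBE is $[r,r]=0$. $\delta_r(v)=[v,r]$; cocommutators $\delta_1,\delta_2$ are equivalent if $\delta_2=\Lambda^2T\circ\delta_1\circ T^{-1}$ for some Lie algebra automorphism $T$. $\mathbb{R}_+$, $\mathbb{R}_-$ denote positive and negative reals. *)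

(* Defs.v *)
From HB Require Import structures.
From mathcomp Require Import all_boot all_order all_algebra.
From mathcomp Require Import reals.
Set Implicit Arguments. Unset Strict Implicit. Unset Printing Implicit Defensive.
Import Order.TTheory GRing.Theory Num.Theory.
Local Open Scope ring_scope.

Section S1.
Variable R : realType.

Definition b1 : 'I_4 := @Ordinal 4 0 isT.
Definition b2 : 'I_4 := @Ordinal 4 1 isT.
Definition b3 : 'I_4 := @Ordinal 4 2 isT.
Definition b4 : 'I_4 := @Ordinal 4 3 isT.

Definition gvec := 'cV[R]_4.
Definition ev (i : 'I_4) : gvec := delta_mx i 0.

Definition brb (i j : 'I_4) : gvec :=
  if (i == b2) && (j == b4) then - ev b1
  else if (i == b4) && (j == b2) then ev b1
  else if (i == b3) && (j == b4) then - ev b3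
  else if (i == b4) && (j == b3) then ev b3
  else 0.

Definition lie (u v : gvec) : gvec :=
  \sum_(i < 4) \sum_(j < 4) (u i 0 * v j 0) *: brb i j.

Definition is_aut (T : 'M[R]_4) : Prop :=
  T \in unitmx /\ forall u v : gvec, T *m lie u v = lie (T *m u) (T *m v).

(* exterior algebra Lambda s_1: coefficient of e_S = e_{s_1} /\ ... /\ e_{s_p}
   (s_1 < ... < s_p) for each subset S of the basis *)
Definition ext := {ffun {set 'I_4} -> R^o}.
Definition eS (S : {set 'I_4}) : ext := [ffun T => (T == S)%:R].

Definition homog (m : nat) (w : ext) : Prop := forall S : {set 'I_4}, #|S| != m -> w S = 0.

Definition inv_sign (S T : {set 'I_4}) : R :=
  (-1) ^+ #|[set p : 'I_4 * 'I_4 | [&& p.1 \in S, p.2 \in T & (p.2 < p.1)%N]]|.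
Definition wedge_basis (S T : {set 'I_4}) : ext :=
  if [disjoint S & T] then inv_sign S T *: eS (S :|: T) else 0.
Definition wedge (a b : ext) : ext :=
  \sum_(S : {set 'I_4}) \sum_(T : {set 'I_4}) (a S * b T) *: wedge_basis S T.

Definition iota (v : gvec) : ext := \sum_(i < 4) v i 0 *: eS [set i].

(* algebraic Schouten bracket:
   [X1/\../\Xp, Y1/\../\Yq] = sum_{i,j} (-1)^(i+j) [Xi,Yj] /\ X1..^Xi..Xp /\ Y1..^Yj..Yq *)
Definition pos (i : 'I_4) (S : {set 'I_4}) : nat := #|[set s in S | (s < i)%N]|.
Definition sch_basis (S T : {set 'I_4}) : ext :=
  \sum_(i in S) \sum_(j in T)
     (-1) ^+ (pos i S + pos j T) *:
       wedge (wedge (iota (brb i j)) (eS (S :\ i))) (eS (T :\ j)).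
Definition schouten (a b : ext) : ext :=
  \sum_(S : {set 'I_4}) \sum_(T : {set 'I_4}) (a S * b T) *: sch_basis S T.

Definition g_invariant (m : nat) (w : ext) : Prop :=
  homog m w /\ forall v : gvec, schouten (iota v) w = 0.

Definition is_rmatrix (r : ext) : Prop := homog 2 r /\ g_invariant 3 (schouten r r).

Definition e12 := eS [set b1; b2].
Definition e13 := eS [set b1; b3].
Definition e14 := eS [set b1; b4].
Definition e23 := eS [set b2; b3].
Definition e24 := eS [set b2; b4].
Definition e34 := eS [set b3; b4].
Definition x1 (r : ext) := r [set b1; b2].
Definition x2 (r : ext) := r [set b1; b3].
Definition x3 (r : ext) := r [set b1; b4].
Definition x4 (r : ext) := r [set b2; b3].
Definition x5 (r : ext) := r [set b2; b4].
Definition x6 (r : ext) := r [set b3; b4].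

Definition lam2 (T : 'M[R]_4) (w : ext) : ext :=
  \sum_(i < 4) \sum_(j < 4 | (i < j)%N)
     w [set i; j] *: wedge (iota (T *m ev i)) (iota (T *m ev j)).

Definition same_orbit (r r' : ext) : Prop :=
  exists T, is_aut T /\ r' = lam2 T r.

Definition delta (r : ext) : gvec -> ext := fun v => schouten (iota v) r.
Definition equiv_coc (d1 d2 : gvec -> ext) : Prop :=
  exists T, is_aut T /\ forall v, d2 v = lam2 T (d1 (invmx T *m v)).

End S1.

Inductive orbit_cls :=
  O0 | OIp | OIm | OII | OIIIp | OIIIm | OIV | OVp | OVm | OVI | OVII
  | OVIIIp | OVIIIm.

Section Cls.
Variable R : realType.
Local Open Scope ring_scope.

Definition in_cls (c : orbit_cls) (r : ext R) : Prop :=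
  homog 2 r /\ x5 r = 0 /\
  match c with
  | O0 => [/\ x1 r = 0, x2 r = 0, x3 r = 0, x4 r = 0 & x6 r = 0]
  | OIp => [/\ 0 < x1 r, x2 r = 0, x3 r = 0, x4 r = 0 & x6 r = 0]
  | OIm => [/\ x1 r < 0, x2 r = 0, x3 r = 0, x4 r = 0 & x6 r = 0]
  | OII => [/\ x1 r = 0, x2 r != 0, x3 r = 0, x4 r = 0 & x6 r = 0]
  | OIIIp => [/\ 0 < x1 r, x2 r != 0, x3 r = 0, x4 r = 0 & x6 r = 0]
  | OIIIm => [/\ x1 r < 0, x2 r != 0, x3 r = 0, x4 r = 0 & x6 r = 0]
  | OIV => [/\ x1 r = 0, x3 r = 0, x4 r != 0 & x6 r = 0]
  | OVp => [/\ 0 < x1 r, x3 r = 0, x4 r != 0 & x6 r = 0]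
  | OVm => [/\ x1 r < 0, x3 r = 0, x4 r != 0 & x6 r = 0]
  | OVI => [/\ x3 r != 0, x4 r = 0 & x6 r = 0]
  | OVII => [/\ x1 r = 0, x3 r = 0 & x6 r != 0]
  | OVIIIp => [/\ 0 < x1 r, x3 r = 0 & x6 r != 0]
  | OVIIIm => [/\ x1 r < 0, x3 r = 0 & x6 r != 0]
  end.

End Cls.

Inductive coc_cls := C0 | CII | CIV | CVI | CVII.

Definition grp (c : orbit_cls) : coc_cls :=
  match c with
  | O0 | OIp | OIm => C0
  | OII | OIIIp | OIIIm => CII
  | OIV | OVp | OVm => CIV
  | OVI => CVI
  | OVII | OVIIIp | OVIIIm => CVII
  end.

Definition rep (R : realType) (k : coc_cls) : ext R :=
  match k with
  | C0 => 0
  | CII => e13 R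
  | CIV => e23 R
  | CVI => e14 R
  | CVII => e34 R
  end.

(* Main.v *)
Require Import Defs.
From HB Require Import structures.
From mathcomp Require Import all_boot all_order all_algebra.
From mathcomp Require Import reals.
From mathcomp Require Import ring lra.
Set Implicit Arguments. Unset Strict Implicit. Unset Printing Implicit Defensive.
Import Order.TTheory GRing.Theory Num.Theory.
Local Open Scope ring_scope.

Definition tst (s i : nat) : bool := odd (s %/ 2 ^ i).
Fact bset_key : unit. Proof. exact: tt. Qed.
Definition bset (s : nat) : {set 'I_4} := locked_with bset_key [set i : 'I_4 | tst s i].
Definition maskS (S : {set 'I_4}) : nat :=
  ((b1 \in S) + (b2 \in S).*2 + (b3 \in S).*2.*2 + (b4 \in S).*2.*2.*2)%N.

Lemma bsetE s : bset s = [set i : 'I_4 | tst s i]. Proof. by rewrite /bset unlock. Qed.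
Lemma in_bset s i : (i \in bset s) = tst s i. Proof. by rewrite bsetE inE. Qed.

Lemma ord4P (P : 'I_4 -> Prop) : P b1 -> P b2 -> P b3 -> P b4 -> forall i, P i.
Proof.
move=> h1 h2 h3 h4 [[|[|[|[|n]]]] hn] //.
- by rewrite (_ : Ordinal hn = b1) //; apply: val_inj.
- by rewrite (_ : Ordinal hn = b2) //; apply: val_inj.
- by rewrite (_ : Ordinal hn = b3) //; apply: val_inj.
- by rewrite (_ : Ordinal hn = b4) //; apply: val_inj.
Qed.

Lemma maskSK S : bset (maskS S) = S.
Proof.
apply/setP; elim/ord4P => /=; rewrite in_bset /maskS /tst;
case: (b1 \in S); case: (b2 \in S); case: (b3 \in S); case: (b4 \in S) => //.
Qed.

Lemma maskS_lt S : (maskS S < 16)%N.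
Proof.
rewrite /maskS;
case: (b1 \in S); case: (b2 \in S); case: (b3 \in S); case: (b4 \in S) => //.
Qed.

Lemma all16 (P : nat -> bool) : all P (iota 0 16) -> forall s, (s < 16)%N -> P s.
Proof. by move=> /allP h s hs; apply: h; rewrite mem_iota. Qed.

Lemma bsetK s : (s < 16)%N -> maskS (bset s) = s.
Proof.
move=> hs; rewrite /maskS !in_bset.
apply/eqP; move: s hs.
by apply: (@all16 (fun s => (tst s b1 + (tst s b2).*2 + (tst s b3).*2.*2 + (tst s b4).*2.*2.*2 == s)%N)).
Qed.

Definition mk4 (f : nat -> bool) : nat := (f 0%N + (f 1%N).*2 + (f 2%N).*2.*2 + (f 3%N).*2.*2.*2)%N.
Definition cnt (f : nat -> bool) : nat := (f 0%N + f 1%N + f 2%N + f 3%N)%N.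

Lemma tst_mk4 f (i : 'I_4) : tst (mk4 f) i = f i.
Proof.
elim/ord4P: i; rewrite /tst /mk4 /=;
case: (f 0%N); case: (f 1%N); case: (f 2%N); case: (f 3%N) => //.
Qed.

Lemma mk4_lt f : (mk4 f < 16)%N.
Proof. rewrite /mk4; case: (f 0%N); case: (f 1%N); case: (f 2%N); case: (f 3%N) => //. Qed.

Lemma bset_mk4 f : bset (mk4 f) = [set i : 'I_4 | f i].
Proof. by apply/setP => i; rewrite ?inE ?in_bset tst_mk4. Qed.

Definition lor s t := mk4 (fun i => tst s i || tst t i).
Definition land s t := mk4 (fun i => tst s i && tst t i).
Definition clr s (i : nat) := mk4 (fun k => tst s k && (k != i)).
Definition sg (i : nat) := mk4 (fun k => k == i).

Lemma bsetU s t : bset s :|: bset t = bset (lor s t).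
Proof. by apply/setP => i; rewrite ?inE ?in_bset tst_mk4. Qed.
Lemma bsetI s t : bset s :&: bset t = bset (land s t).
Proof. by apply/setP => i; rewrite ?inE ?in_bset tst_mk4. Qed.
Lemma bsetD1 s (i : 'I_4) : bset s :\ i = bset (clr s i).
Proof. by apply/setP => k; rewrite ?inE ?in_bset tst_mk4 andbC. Qed.
Lemma bset1 (i : 'I_4) : [set i] = bset (sg i).
Proof. by apply/setP => k; rewrite ?inE ?in_bset tst_mk4. Qed.
Lemma bset0 : set0 = bset 0.
Proof. by apply/setP => k; rewrite ?inE ?in_bset /tst div0n. Qed.

Lemma bset_inj s t : (s < 16)%N -> (t < 16)%N -> (bset s == bset t) = (s == t).
Proof.
move=> hs ht; apply/eqP/eqP => [h|->//].
by rewrite -(bsetK hs) -(bsetK ht) h.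
Qed.

Lemma bset_disj s t : [disjoint bset s & bset t] = (land s t == 0%N).
Proof. by rewrite -setI_eq0 bsetI bset0 bset_inj ?mk4_lt. Qed.

Lemma ord0E : ord0 = b1 :> 'I_4. Proof. exact: val_inj. Qed.
Lemma lift1E : lift ord0 ord0 = b2 :> 'I_4. Proof. exact: val_inj. Qed.
Lemma lift2E : lift ord0 (lift ord0 ord0) = b3 :> 'I_4. Proof. exact: val_inj. Qed.
Lemma lift3E : lift ord0 (lift ord0 (lift ord0 ord0)) = b4 :> 'I_4. Proof. exact: val_inj. Qed.

Lemma sum4 (V : nmodType) (F : 'I_4 -> V) : \sum_(i < 4) F i = F b1 + F b2 + F b3 + F b4.
Proof. by rewrite !big_ord_recl big_ord0 addr0 !addrA lift3E lift2E lift1E ord0E. Qed.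

Lemma card4 (P : pred 'I_4) : #|[set i | P i]| = (P b1 + P b2 + P b3 + P b4)%N.
Proof.
rewrite cardsE -sum1_card big_mkcond /= !big_ord_recl big_ord0 addn0 !addnA.
rewrite lift3E lift2E lift1E ord0E.
rewrite -[b1 \in P]/(P b1) -[b2 \in P]/(P b2) -[b3 \in P]/(P b3) -[b4 \in P]/(P b4).
by case: (P b1); case: (P b2); case: (P b3); case: (P b4).
Qed.

Definition nsum4 (f : nat -> nat) : nat := (f 0%N + f 1%N + f 2%N + f 3%N)%N.
Definition invn s t := nsum4 (fun i => cnt (fun j => [&& tst s i, tst t j & (j < i)%N])).
Definition posn (i : nat) s := cnt (fun x => tst s x && (x < i)%N).
Definition pc s := cnt (tst s).

Lemma card_bset s : #|bset s| = pc s.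
Proof. by rewrite bsetE card4. Qed.

Lemma card_inv s t :
  #|[set p : 'I_4 * 'I_4 | [&& p.1 \in bset s, p.2 \in bset t & (p.2 < p.1)%N]]| = invn s t.
Proof.
set A := [set p : 'I_4 * 'I_4 | _].
rewrite cardsE -sum1_card big_mkcond /=.
transitivity (\sum_i \sum_j (if [&& i \in bset s, j \in bset t & (j < i)%N] then 1 else 0))%N.
  by rewrite pair_bigA; apply: eq_bigr => -[i j].
rewrite !sum4 ?inE ?in_bset /=.
rewrite /invn /nsum4 /cnt /=.
by case: (tst s 0); case: (tst s 1); case: (tst s 2); case: (tst s 3);
   case: (tst t 0); case: (tst t 1); case: (tst t 2); case: (tst t 3).
Qed.

Lemma pos_bset (i : 'I_4) s : pos i (bset s) = posn i s.
Proof. by rewrite /pos card4 ?inE ?in_bset. Qed.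

Definition lsum {X : Type} {V : nmodType} (l : seq X) (F : X -> V) : V :=
  foldr (fun x acc => F x + acc) 0 l.

Lemma big_lsum {X : Type} {V : nmodType} (l : seq X) (F : X -> V) :
  \sum_(x <- l) F x = lsum l F.
Proof. by elim: l => [|x l IH]; rewrite ?big_nil ?big_cons ?IH. Qed.

Lemma eq_lsum {X : Type} {V : nmodType} (l : seq X) (F G : X -> V) :
  (forall x, F x = G x) -> lsum l F = lsum l G.
Proof. by move=> h; elim: l => //= x l ->; rewrite h. Qed.

Lemma eq_lsum_in {X : eqType} {V : nmodType} (l : seq X) (F G : X -> V) :
  (forall x, x \in l -> F x = G x) -> lsum l F = lsum l G.
Proof.
elim: l => //= x l IH h; rewrite h ?mem_head // IH // => y hy.
by apply: h; rewrite in_cons hy orbT.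
Qed.

Definition i16 := iota 0 16.

Lemma sum_set (V : nmodType) (F : {set 'I_4} -> V) :
  \sum_(S : {set 'I_4}) F S = lsum i16 (fun s => F (bset s)).
Proof.
rewrite (reindex_onto (fun j : 'I_16 => bset j) (fun S => inord (maskS S))) /=;
  last by move=> S _; rewrite inordK ?maskS_lt // maskSK.
rewrite (eq_bigl xpredT); last by move=> j; rewrite bsetK // inord_val eqxx.
by rewrite -(big_mkord xpredT (fun j => F (bset j))) /index_iota subn0 big_lsum.
Qed.

Lemma lsum_mulr {X : Type} {K : pzSemiRingType} (l : seq X) (F : X -> K) c :
  c * lsum l F = lsum l (fun x => c * F x).
Proof. by rewrite -!big_lsum mulr_sumr. Qed.
Lemma lsum_mull {X : Type} {K : pzSemiRingType} (l : seq X) (F : X -> K) c :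
  lsum l F * c = lsum l (fun x => F x * c).
Proof. by rewrite -!big_lsum mulr_suml. Qed.
Lemma lsum_exch {X Y : Type} {V : nmodType} (l : seq X) (l' : seq Y) (F : X -> Y -> V) :
  lsum l (fun x => lsum l' (F x)) = lsum l' (fun y => lsum l (fun x => F x y)).
Proof.
rewrite -big_lsum (eq_bigr (fun x => \sum_(y <- l') F x y)) => [|x _]; last by rewrite big_lsum.
by rewrite exchange_big big_lsum; apply: eq_lsum => y; rewrite big_lsum.
Qed.
Lemma lsum_delta {K : pzSemiRingType} (G : nat -> K) c : (c < 16)%N ->
  lsum i16 (fun x => (x == c)%:R * G x) = G c.
Proof.
move=> hc; rewrite -big_lsum /i16 (big_rem c) ?mem_iota ?add0n ?hc //.
rewrite eqxx mul1r big1_seq; first exact: addr0.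
move=> x /andP[_]; rewrite (mem_rem_uniq _ (iota_uniq 0 16)) !inE.
by case/andP => /negbTE ->; rewrite mul0r.
Qed.

Section Gen.
Variable K : pzRingType.
Definition l4 (f : nat -> K) : K := f 0%N + f 1%N + f 2%N + f 3%N.
Definition cwG (s t u : nat) : K :=
  if land s t == 0%N then (-1) ^+ invn s t * (mk4 (tst u) == lor s t)%:R else 0.
Definition brbG (i j k : nat) : K :=
  if (i == 1%N) && (j == 3%N) then - (k == 0%N)%:R
  else if (i == 3%N) && (j == 1%N) then (k == 0%N)%:R
  else if (i == 2%N) && (j == 3%N) then - (k == 2%N)%:R
  else if (i == 3%N) && (j == 2%N) then (k == 2%N)%:R
  else 0.
Definition csG (s t u : nat) : K :=
  l4 (fun i => if tst s i then l4 (fun j => if tst t j then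
     (-1) ^+ (posn i s + posn j t) *
     lsum i16 (fun y => l4 (fun k => brbG i j k * cwG (sg k) (clr s i) y) * cwG y (clr t j) u)
   else 0) else 0).
End Gen.

Section RR.
Variable R : realType.

Lemma eSE S U : eS R S U = (U == S)%:R. Proof. by rewrite ffunE. Qed.
Lemma scaleE (c : R) (f : ext R) U : (c *: f) U = c * f U. Proof. by rewrite ffunE. Qed.
Lemma zeroE U : (0 : ext R) U = 0. Proof. by rewrite ffunE. Qed.

Lemma wedgeE (a b : ext R) U :
  wedge a b U = \sum_S \sum_T a S * b T * wedge_basis R S T U.
Proof.
rewrite /wedge sum_ffunE; apply: eq_bigr => S _; rewrite sum_ffunE.
by apply: eq_bigr => T _; rewrite scaleE.
Qed.

Lemma bset_norm u : bset u = bset (mk4 (tst u)).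
Proof. by rewrite bset_mk4 bsetE. Qed.

Lemma wbE s t u : wedge_basis R (bset s) (bset t) (bset u) = cwG R s t u.
Proof.
rewrite /wedge_basis /cwG bset_disj; case: eqP => _; last by rewrite zeroE.
by rewrite scaleE eSE /inv_sign card_inv bsetU [bset u]bset_norm bset_inj ?mk4_lt.
Qed.

Lemma mem_i16 x : (x \in i16) = (x < 16)%N.
Proof. by rewrite mem_iota add0n. Qed.

Lemma wedge16 (a b : ext R) u :
  wedge a b (bset u) = lsum i16 (fun s => lsum i16 (fun t => a (bset s) * b (bset t) * cwG R s t u)).
Proof.
rewrite wedgeE sum_set; apply: eq_lsum => s; rewrite sum_set.
by apply: eq_lsum => t; rewrite wbE.
Qed.

Lemma wedge_eSr (a : ext R) c u : (c < 16)%N ->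
  wedge a (eS R (bset c)) (bset u) = lsum i16 (fun y => a (bset y) * cwG R y c u).
Proof.
move=> hc; rewrite wedge16; apply: eq_lsum => y.
rewrite -(lsum_delta (fun t => a (bset y) * cwG R y t u) hc).
apply: eq_lsum_in => t; rewrite mem_i16 => ht.
by rewrite eSE bset_inj // mulrCA mulrA.
Qed.

Lemma iotaE (v : gvec R) x : (x < 16)%N ->
  Defs.iota v (bset x) = \sum_(k < 4) v k 0 * (x == sg k)%:R.
Proof.
move=> hx; rewrite /Defs.iota sum_ffunE; apply: eq_bigr => k _.
by rewrite scaleE eSE bset1 bset_inj ?mk4_lt.
Qed.

Lemma iota_coll (v : gvec R) (G : nat -> R) :
  lsum i16 (fun x => Defs.iota v (bset x) * G x) = \sum_(k < 4) v k 0 * G (sg k).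
Proof.
rewrite (eq_lsum_in (G := fun x => \sum_(k < 4) v k 0 * ((x == sg k)%:R * G x))); last first.
  move=> x; rewrite mem_i16 => hx; rewrite iotaE // mulr_suml.
  by apply: eq_bigr => k _; rewrite mulrA.
rewrite -big_lsum exchange_big; apply: eq_bigr => k _.
by rewrite -mulr_sumr big_lsum lsum_delta // mk4_lt.
Qed.

Lemma brbE (i j k : 'I_4) : brb R i j k 0 = brbG R i j k.
Proof.
by elim/ord4P: i; elim/ord4P: j; elim/ord4P: k;
  rewrite /brb /brbG /ev /= ?mxE /= ?oppr0 ?subr0 ?mxE /=.
Qed.

Lemma schE (a b : ext R) U :
  schouten a b U = \sum_S \sum_T a S * b T * sch_basis R S T U.
Proof.
rewrite /schouten sum_ffunE; apply: eq_bigr => S _; rewrite sum_ffunE.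
by apply: eq_bigr => T _; rewrite scaleE.
Qed.

Lemma sbE s t u : sch_basis R (bset s) (bset t) (bset u) = csG R s t u.
Proof.
rewrite /sch_basis sum_ffunE.
under eq_bigr => i _ do rewrite sum_ffunE.
under eq_bigr => i _ do under eq_bigr => j _ do
  rewrite scaleE !bsetD1 wedge_eSr ?mk4_lt // pos_bset pos_bset.
under eq_bigr => i _ do under eq_bigr => j _ do under eq_lsum => y do
  rewrite wedge_eSr ?mk4_lt // iota_coll sum4 !brbE.
under eq_bigr => i _ do rewrite big_mkcond sum4 !in_bset.
rewrite big_mkcond sum4 !in_bset.
by [].
Qed.
End RR.

Section Morph.
Variables (K1 K2 : pzRingType) (f : {rmorphism K1 -> K2}).
Lemma rm_lsum {X : Type} (l : seq X) (F : X -> K1) : f (lsum l F) = lsum l (fun x => f (F x)).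
Proof. by elim: l => /= [|x l <-]; rewrite ?rmorph0 ?rmorphD. Qed.
Lemma rm_l4 (F : nat -> K1) : f (l4 F) = l4 (fun x => f (F x)).
Proof. by rewrite /l4 !rmorphD. Qed.
Lemma eq_l4 {K : pzRingType} (F G : nat -> K) : (forall x, F x = G x) -> l4 F = l4 G.
Proof. by move=> h; rewrite /l4 !h. Qed.
Lemma rm_if b (x : K1) : f (if b then x else 0) = if b then f x else 0.
Proof. by case: b; rewrite ?rmorph0. Qed.
Lemma rm_cwG s t u : f (cwG K1 s t u) = cwG K2 s t u.
Proof. by rewrite /cwG rm_if rmorphM rmorphXn rmorphN1 rmorph_nat. Qed.
Lemma rm_brbG i j k : f (brbG K1 i j k) = brbG K2 i j k.
Proof. by rewrite /brbG; repeat case: ifP => _; rewrite ?rmorphN ?rmorph_nat ?rmorph0. Qed.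
Lemma rm_csG s t u : f (csG K1 s t u) = csG K2 s t u.
Proof.
rewrite /csG rm_l4; apply: eq_l4 => i; rewrite rm_if rm_l4; congr (if _ then _ else _).
apply: eq_l4 => j; rewrite rm_if; congr (if _ then _ else _).
rewrite rmorphM rmorphXn rmorphN1 rm_lsum; congr (_ * _); apply: eq_lsum => y.
rewrite rmorphM rm_cwG rm_l4; congr (_ * _); apply: eq_l4 => k.
by rewrite rmorphM rm_cwG rm_brbG.
Qed.
End Morph.

Definition csI := csG int.
Lemma csGI (R : realType) s t u : csG R s t u = (csI s t u)%:~R.
Proof. by rewrite -(rm_csG intr). Qed.


Definition allp := [seq (s, t) | s <- i16, t <- i16].
Definition pairs m n := [seq (s, t) | s <- [seq s <- i16 | pc s == m], t <- [seq t <- i16 | pc t == n]].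
Definition tab (m n u : nat) : seq (nat * nat * int) :=
  [seq q <- [seq (p, csI p.1 p.2 u) | p <- pairs m n] | q.2 != 0].
Definition tabw (u : nat) : seq (nat * nat * int) :=
  [seq q <- [seq (p, cwG int p.1 p.2 u) | p <- pairs 1 1] | q.2 != 0].

Lemma lsum_cat {X : Type} {V : nmodType} (l1 l2 : seq X) (F : X -> V) :
  lsum (l1 ++ l2) F = lsum l1 F + lsum l2 F.
Proof. by elim: l1 => /= [|x l ->]; rewrite ?add0r ?addrA. Qed.
Lemma lsum_map {X Y : Type} {V : nmodType} (l : seq X) (g : X -> Y) (F : Y -> V) :
  lsum (map g l) F = lsum l (fun x => F (g x)).
Proof. by elim: l => //= x l ->. Qed.
Lemma lsum_filter {X : Type} {V : nmodType} (l : seq X) (P : pred X) (F : X -> V) :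
  (forall x, ~~ P x -> F x = 0) -> lsum [seq x <- l | P x] F = lsum l F.
Proof. by move=> h; elim: l => //= x l IH; case: ifP => hx /=; rewrite IH // h ?hx // add0r. Qed.
Lemma lsum_allpairs {V : nmodType} (l1 l2 : seq nat) (F : nat * nat -> V) :
  lsum l1 (fun s => lsum l2 (fun t => F (s, t))) = lsum [seq (s, t) | s <- l1, t <- l2] F.
Proof. by elim: l1 => //= s l ->; rewrite lsum_cat lsum_map. Qed.
Lemma lsum_allp {V : nmodType} (F : nat * nat -> V) :
  lsum i16 (fun s => lsum i16 (fun t => F (s, t))) = lsum allp F.
Proof. exact: lsum_allpairs. Qed.

Lemma big_lsum_0 {X : Type} {V : nmodType} (l : seq X) (F : X -> V) :
  (forall x, F x = 0) -> lsum l F = 0.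
Proof. by move=> h; elim: l => //= x l ->; rewrite h addr0. Qed.

Section RR2.
Variable R : realType.

Lemma homog_bset m (a : ext R) s : homog m a -> pc s != m -> a (bset s) = 0.
Proof. by move=> h hs; apply: h; rewrite card_bset. Qed.

Lemma restrict (a b : ext R) m n (G : nat -> nat -> R) : homog m a -> homog n b ->
  lsum i16 (fun s => lsum i16 (fun t => a (bset s) * b (bset t) * G s t)) =
  lsum (pairs m n) (fun p => a (bset p.1) * b (bset p.2) * G p.1 p.2).
Proof.
move=> ha hb; rewrite /pairs -lsum_allpairs.
rewrite lsum_filter; last by move=> s hs; apply: big_lsum_0 => t; rewrite (homog_bset ha hs) !mul0r.
apply: eq_lsum => s; rewrite lsum_filter // => t ht.
by rewrite (homog_bset hb ht) mulr0 mul0r.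
Qed.

Lemma schT (a b : ext R) m n u : homog m a -> homog n b ->
  schouten a b (bset u) =
  lsum (tab m n u) (fun q => a (bset q.1.1) * b (bset q.1.2) * (q.2)%:~R).
Proof.
move=> ha hb; rewrite schE sum_set.
under eq_lsum => s do rewrite sum_set.
under eq_lsum => s do under eq_lsum => t do rewrite sbE csGI.
rewrite (restrict (fun s t => (csI s t u)%:~R) ha hb).
rewrite /tab lsum_filter; last by move=> q; rewrite negbK => /eqP ->; rewrite mulr0.
by rewrite lsum_map.
Qed.

Lemma wedgeT (a b : ext R) u : homog 1 a -> homog 1 b ->
  wedge a b (bset u) =
  lsum (tabw u) (fun q => a (bset q.1.1) * b (bset q.1.2) * (q.2)%:~R).
Proof.
move=> ha hb; rewrite wedge16.
under eq_lsum => s do under eq_lsum => t do rewrite -(rm_cwG intr).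
rewrite (restrict (fun s t => (cwG int s t u)%:~R) ha hb).
rewrite /tabw lsum_filter; last by move=> q; rewrite negbK => /eqP ->; rewrite mulr0.
by rewrite lsum_map.
Qed.
End RR2.

Lemma case16 (P : nat -> Prop) :
  P 0%N -> P 1%N -> P 2%N -> P 3%N -> P 4%N -> P 5%N -> P 6%N -> P 7%N ->
  P 8%N -> P 9%N -> P 10%N -> P 11%N -> P 12%N -> P 13%N -> P 14%N -> P 15%N ->
  forall k, (k < 16)%N -> P k.
Proof.
move=> h0 h1 h2 h3 h4 h5 h6 h7 h8 h9 h10 h11 h12 h13 h14 h15.
by do 16 (case=> //; try by []); move=> k.
Qed.

Section RR3.
Variable R : realType.

Definition mk2 (y1 y2 y3 y4 y5 y6 : R) : ext R :=
  y1 *: eS R (bset 3) + y2 *: eS R (bset 5) + y3 *: eS R (bset 9) +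
  y4 *: eS R (bset 6) + y5 *: eS R (bset 10) + y6 *: eS R (bset 12).

Lemma addE (f g : ext R) U : (f + g) U = f U + g U. Proof. by rewrite ffunE. Qed.

Lemma eSbE s k : (s < 16)%N -> (k < 16)%N -> eS R (bset s) (bset k) = (k == s)%:R.
Proof. by move=> hs hk; rewrite eSE bset_inj. Qed.

Lemma mk2E y1 y2 y3 y4 y5 y6 k : (k < 16)%N ->
  mk2 y1 y2 y3 y4 y5 y6 (bset k) =
  y1 * (k == 3)%:R + y2 * (k == 5)%:R + y3 * (k == 9)%:R +
  y4 * (k == 6)%:R + y5 * (k == 10)%:R + y6 * (k == 12)%:R.
Proof. by move=> hk; rewrite /mk2 !addE !scaleE !eSbE. Qed.

Lemma ext16 (a b : ext R) : (forall k, (k < 16)%N -> a (bset k) = b (bset k)) -> a = b.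
Proof. by move=> h; apply/ffunP => S; rewrite -(maskSK S) h ?maskS_lt. Qed.

Lemma iotaS (v : gvec R) k : (k < 16)%N ->
  Defs.iota v (bset k) = v b1 0 * (k == 1)%:R + v b2 0 * (k == 2)%:R +
                         v b3 0 * (k == 4)%:R + v b4 0 * (k == 8)%:R.
Proof. by move=> hk; rewrite iotaE // sum4. Qed.

Lemma homog_iota (v : gvec R) : homog 1 (Defs.iota v).
Proof.
move=> S; rewrite -(maskSK S) card_bset iotaS ?maskS_lt //.
move: (maskS S) (maskS_lt S); apply: case16 => _ //=; by rewrite ?mulr0 ?addr0.
Qed.
End RR3.

Ltac evtab := match goal with |- context [tab ?m ?n ?u] =>
  let l := eval vm_compute in (tab m n u) in
  rewrite (_ : tab m n u = l); [| by vm_compute] end.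
Ltac evtabw := match goal with |- context [tabw ?u] =>
  let l := eval vm_compute in (tabw u) in
  rewrite (_ : tabw u = l); [| by vm_compute] end.

Section RR4.
Variable R : realType.
Lemma homog_mk2 y1 y2 y3 y4 y5 y6 : homog 2 (mk2 y1 y2 y3 y4 y5 y6 : ext R).
Proof.
move=> S; rewrite -(maskSK S) card_bset mk2E ?maskS_lt //.
move: (maskS S) (maskS_lt S); apply: case16 => _ //=; by rewrite ?mulr0 ?addr0.
Qed.

Lemma intrE (n : nat) : (Posz n)%:~R = n%:R :> R. Proof. by []. Qed.
Lemma intrNE (n : nat) : (Negz n)%:~R = - (n.+1)%:R :> R. Proof. by rewrite NegzE mulrNz. Qed.

Lemma deltaE (v : gvec R) y1 y2 y3 y4 y5 y6 :
  delta (mk2 y1 y2 y3 y4 y5 y6) v =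
  mk2 (v b2 0 * y5) (v b2 0 * y6 - v b3 0 * y3 + v b4 0 * y2 + v b4 0 * y4)
      (v b4 0 * y5) (- v b3 0 * y5 + v b4 0 * y4) 0 (v b4 0 * y6).
Proof.
apply: ext16; apply: case16; rewrite /delta (schT _ (homog_iota v) (homog_mk2 _ _ _ _ _ _));
  evtab; rewrite /lsum /= ?iotaS // ?mk2E //= ?intrE ?intrNE. 
all: ring.
Qed.

Definition mk3 (z7 z11 z13 z14 : R) : ext R :=
  z7 *: eS R (bset 7) + z11 *: eS R (bset 11) + z13 *: eS R (bset 13) + z14 *: eS R (bset 14).

Lemma mk3E z7 z11 z13 z14 k : (k < 16)%N ->
  mk3 z7 z11 z13 z14 (bset k) =
  z7 * (k == 7)%:R + z11 * (k == 11)%:R + z13 * (k == 13)%:R + z14 * (k == 14)%:R.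
Proof. by move=> hk; rewrite /mk3 !addE !scaleE !eSbE. Qed.

Lemma homog_mk3 z7 z11 z13 z14 : homog 3 (mk3 z7 z11 z13 z14).
Proof.
move=> S; rewrite -(maskSK S) card_bset mk3E ?maskS_lt //.
move: (maskS S) (maskS_lt S); apply: case16 => _ //=; by rewrite ?mulr0 ?addr0.
Qed.

Lemma homog2E (w : ext R) : homog 2 w ->
  w = mk2 (w (bset 3)) (w (bset 5)) (w (bset 9)) (w (bset 6)) (w (bset 10)) (w (bset 12)).
Proof.
move=> hw; apply: ext16; apply: case16; rewrite mk2E //= ?mulr0 ?mulr1 ?addr0 ?add0r //;
  by rewrite (homog_bset hw).
Qed.

Lemma homog3E (w : ext R) : homog 3 w ->
  w = mk3 (w (bset 7)) (w (bset 11)) (w (bset 13)) (w (bset 14)).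
Proof.
move=> hw; apply: ext16; apply: case16; rewrite mk3E //= ?mulr0 ?mulr1 ?addr0 ?add0r //;
  by rewrite (homog_bset hw).
Qed.

Lemma rrE y1 y2 y3 y4 y5 y6 :
  schouten (mk2 y1 y2 y3 y4 y5 y6) (mk2 y1 y2 y3 y4 y5 y6) =
  mk3 (2 * (y3 * y4 - y2 * y5 - y4 * y5)) (- 2 * y5 ^+ 2)
      (2 * (y3 * y6 - y5 * y6)) (2 * (y5 * y6)).
Proof.
apply: ext16; apply: case16; rewrite (schT _ (homog_mk2 _ _ _ _ _ _) (homog_mk2 _ _ _ _ _ _));
  evtab; rewrite /lsum /= ?mk2E // ?mk3E //= ?intrE ?intrNE.
all: ring.
Qed.

Lemma inv3E (v : gvec R) z7 z11 z13 z14 :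
  schouten (Defs.iota v) (mk3 z7 z11 z13 z14) =
  mk3 (- v b2 0 * z14 - v b3 0 * z11 + v b4 0 * z7) 0
      (v b4 0 * z13 + v b4 0 * z14) (v b4 0 * z14).
Proof.
apply: ext16; apply: case16; rewrite (schT _ (homog_iota v) (homog_mk3 _ _ _ _));
  evtab; rewrite /lsum /= ?iotaS // ?mk3E //= ?intrE ?intrNE.
all: ring.
Qed.
End RR4.

Section M.
Variable R : realType.

Definition mkTe (a b q d e f : R) (i j : nat) : R :=
  match i, j with
  | 0%N, 0%N => a | 0%N, 1%N => b | 0%N, 3%N => d
  | 1%N, 1%N => a | 1%N, 3%N => e
  | 2%N, 2%N => q | 2%N, 3%N => f
  | 3%N, 3%N => 1
  | _, _ => 0
  end.
Definition mkT a b q d e f : 'M[R]_4 := \matrix_(i < 4, j < 4) mkTe a b q d e f i j.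

Lemma mulev (T : 'M[R]_4) i k : (T *m ev R i) k 0 = T k i.
Proof. by rewrite /ev -colE mxE. Qed.

Lemma evE (i k : 'I_4) : ev R i k 0 = (k == i)%:R.
Proof. by rewrite /ev mxE andbT. Qed.

Lemma lieE (u v : gvec R) k : lie u v k 0 =
  (k == b1)%:R * - (u b2 0 * v b4 0 - u b4 0 * v b2 0) +
  (k == b3)%:R * - (u b3 0 * v b4 0 - u b4 0 * v b3 0).
Proof.
rewrite /lie summxE sum4; rewrite !summxE !sum4 !mxE !eqxx !andbT.
ring.
Qed.

Lemma mulmxE4 (A : 'M[R]_4) (v : gvec R) k : (A *m v) k 0 = A k b1 * v b1 0 + A k b2 * v b2 0 + A k b3 * v b3 0 + A k b4 * v b4 0.
Proof. by rewrite mxE sum4. Qed.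

Lemma mkTM a b q d e f a' b' q' d' e' f' :
  mkT a b q d e f *m mkT a' b' q' d' e' f' =
  mkT (a * a') (a * b' + b * a') (q * q') (a * d' + b * e' + d) (a * e' + e) (q * f' + f).
Proof.
apply/matrixP => i j; rewrite !mxE sum4 !mxE.
by elim/ord4P: i; elim/ord4P: j; rewrite /mkTe /=; ring.
Qed.

Lemma mkT1 : mkT 1 0 1 0 0 0 = 1%:M.
Proof.
apply/matrixP => i j; rewrite !mxE.
by elim/ord4P: i; elim/ord4P: j.
Qed.

Lemma invmx_eq (A B : 'M[R]_4) : A *m B = 1%:M -> invmx A = B.
Proof.
move=> h; have [uA _] := mulmx1_unit h.
by rewrite -[invmx A]mulmx1 -h mulmxA mulVmx // mul1mx.
Qed.

Definition ia a b q d e f : R * R * R * R * R * R :=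
  (a^-1, - b / a ^+ 2, q^-1, (b * e - a * d) / a ^+ 2, - e / a, - f / q).

Lemma mkT_inv a b q d e f : a != 0 -> q != 0 ->
  mkT a b q d e f *m mkT a^-1 (- b / a ^+ 2) q^-1 ((b * e - a * d) / a ^+ 2) (- e / a) (- f / q) = 1%:M.
Proof.
move=> ha hq; rewrite mkTM -mkT1; congr mkT; field; by rewrite ?ha ?hq.
Qed.

Lemma mkT_aut a b q d e f : a != 0 -> q != 0 -> is_aut (mkT a b q d e f).
Proof.
move=> ha hq; split; first by have [] := mulmx1_unit (mkT_inv b d e f ha hq).
move=> u v; apply/matrixP => k j; rewrite (ord1 j) {j}.
rewrite mulmxE4 !lieE !mulmxE4 !mxE.
by elim/ord4P: k; rewrite /mkTe /=; ring.
Qed.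

Lemma aut_form (T : 'M[R]_4) : is_aut T ->
  exists a b q d e f, [/\ a != 0, q != 0 & T = mkT a b q d e f].
Proof.
move=> [uT hT].
have E i j k := congr1 (fun M : 'M[R]_(4,1) => M k 0) (hT (ev R i) (ev R j)).
have col0 : forall i, (forall k, T k i = 0) -> False.
  move=> i hi; have : T *m ev R i = 0.
    by apply/matrixP => k j; rewrite (ord1 j) mulev hi mxE.
  move/(congr1 (mulmx (invmx T))); rewrite mulKmx // mulmx0.
  move/matrixP/(_ i 0); rewrite evE eqxx !mxE; apply/eqP; exact: oner_neq0.
have := E b2 b4 b2; rewrite /= mulmxE4 !lieE !evE !mulev /= => h1.
have := E b2 b4 b4; rewrite /= mulmxE4 !lieE !evE !mulev /= => h2.
have := E b2 b4 b1; rewrite /= mulmxE4 !lieE !evE !mulev /= => h3.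
have := E b2 b4 b3; rewrite /= mulmxE4 !lieE !evE !mulev /= => h4.
have := E b3 b4 b2; rewrite /= mulmxE4 !lieE !evE !mulev /= => h5.
have := E b3 b4 b4; rewrite /= mulmxE4 !lieE !evE !mulev /= => h6.
have := E b3 b4 b1; rewrite /= mulmxE4 !lieE !evE !mulev /= => h7.
have := E b3 b4 b3; rewrite /= mulmxE4 !lieE !evE !mulev /= => h8.
have := E b1 b4 b3; rewrite /= mulmxE4 !lieE !evE !mulev /= => h9.
have := E b2 b3 b3; rewrite /= mulmxE4 !lieE !evE !mulev /= => h10.
have t21 : T b2 b1 = 0 by lra.
have t41 : T b4 b1 = 0 by lra.
have t23 : T b2 b3 = 0 by lra.
have t43 : T b4 b3 = 0 by lra.
have t13 : T b1 b3 = 0 by rewrite t23 t43 in h7; lra.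
have t33 : T b3 b3 != 0.
  apply/negP => /eqP t33; apply: (col0 b3); elim/ord4P; by [].
have t44 : T b4 b4 = 1.
  have : T b3 b3 * (T b4 b4 - 1) = 0 by rewrite t43 in h8; lra.
  by move/eqP; rewrite mulf_eq0 (negbTE t33) /= subr_eq0 => /eqP.
have t42 : T b4 b2 = 0.
  have : T b4 b2 * T b3 b3 = 0 by rewrite t43 in h10; lra.
  by move/eqP; rewrite mulf_eq0 (negbTE t33) orbF => /eqP.
have t31 : T b3 b1 = 0 by rewrite t44 t41 in h9; lra.
have t32 : T b3 b2 = 0 by rewrite t44 t42 t31 in h4; lra.
have t22 : T b2 b2 = T b1 b1 by rewrite t44 t42 in h3; lra.
have t11 : T b1 b1 != 0.
  apply/negP => /eqP t11; apply: (col0 b1); elim/ord4P; by [].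
exists (T b1 b1), (T b1 b2), (T b3 b3), (T b1 b4), (T b2 b4), (T b3 b4); split => //.
by apply/matrixP => i j; rewrite mxE; elim/ord4P: i; elim/ord4P: j; rewrite /mkTe /=.
Qed.
End M.

Lemma set12 : [set b1; b2] = bset 3. Proof. by apply/setP; elim/ord4P; rewrite ?inE ?in_bset. Qed.
Lemma set13 : [set b1; b3] = bset 5. Proof. by apply/setP; elim/ord4P; rewrite ?inE ?in_bset. Qed.
Lemma set14 : [set b1; b4] = bset 9. Proof. by apply/setP; elim/ord4P; rewrite ?inE ?in_bset. Qed.
Lemma set23 : [set b2; b3] = bset 6. Proof. by apply/setP; elim/ord4P; rewrite ?inE ?in_bset. Qed.
Lemma set24 : [set b2; b4] = bset 10. Proof. by apply/setP; elim/ord4P; rewrite ?inE ?in_bset. Qed.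
Lemma set34 : [set b3; b4] = bset 12. Proof. by apply/setP; elim/ord4P; rewrite ?inE ?in_bset. Qed.

Section L.
Variable R : realType.

Lemma lam2C (T : 'M[R]_4) (w : ext R) U :
  lam2 T w U = \sum_(i < 4) \sum_(j < 4 | (i < j)%N)
     w [set i; j] * wedge (Defs.iota (T *m ev R i)) (Defs.iota (T *m ev R j)) U.
Proof.
rewrite /lam2 sum_ffunE; apply: eq_bigr => i _; rewrite sum_ffunE.
by apply: eq_bigr => j _; rewrite scaleE.
Qed.

Lemma lam2E (a b q d e f y1 y2 y3 y4 y5 y6 : R) :
  lam2 (mkT a b q d e f) (mk2 y1 y2 y3 y4 y5 y6) =
  mk2 (a ^+ 2 * y1 + a * e * y3 + (b * e - a * d) * y5)
      (a * q * y2 + a * f * y3 + b * q * y4 + b * f * y5 - q * d * y6)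
      (a * y3 + b * y5)
      (a * q * y4 + a * f * y5 - q * e * y6)
      (a * y5) (q * y6).
Proof.
apply: ext16; apply: case16; rewrite lam2C; under eq_bigr => i _ do rewrite big_mkcond sum4;
  rewrite sum4 /= ?mul0r ?addr0 ?add0r set12 set13 set14 set23 set24 set34 !mk2E //=;
  rewrite !(wedgeT _ (homog_iota _) (homog_iota _)); evtabw; rewrite /lsum /= ?iotaS // ?mulev ?mxE /mkTe /= ?intrE ?intrNE.
all: ring.
Qed.
End L.

Section P.
Variable R : realType.


Lemma mk2_3 (y1 y2 y3 y4 y5 y6 : R) : mk2 y1 y2 y3 y4 y5 y6 (bset 3) = y1.
Proof. by rewrite mk2E //=; ring. Qed.
Lemma mk2_5 (y1 y2 y3 y4 y5 y6 : R) : mk2 y1 y2 y3 y4 y5 y6 (bset 5) = y2.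
Proof. by rewrite mk2E //=; ring. Qed.
Lemma mk2_9 (y1 y2 y3 y4 y5 y6 : R) : mk2 y1 y2 y3 y4 y5 y6 (bset 9) = y3.
Proof. by rewrite mk2E //=; ring. Qed.
Lemma mk2_6 (y1 y2 y3 y4 y5 y6 : R) : mk2 y1 y2 y3 y4 y5 y6 (bset 6) = y4.
Proof. by rewrite mk2E //=; ring. Qed.
Lemma mk2_10 (y1 y2 y3 y4 y5 y6 : R) : mk2 y1 y2 y3 y4 y5 y6 (bset 10) = y5.
Proof. by rewrite mk2E //=; ring. Qed.
Lemma mk2_12 (y1 y2 y3 y4 y5 y6 : R) : mk2 y1 y2 y3 y4 y5 y6 (bset 12) = y6.
Proof. by rewrite mk2E //=; ring. Qed.

Lemma mk2_inj (y1 y2 y3 y4 y5 y6 z1 z2 z3 z4 z5 z6 : R) :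
  mk2 y1 y2 y3 y4 y5 y6 = mk2 z1 z2 z3 z4 z5 z6 ->
  y1 = z1 /\ y2 = z2 /\ y3 = z3 /\ y4 = z4 /\ y5 = z5 /\ y6 = z6.
Proof.
move=> h; split; [|split; [|split; [|split; [|split]]]].
- by have := congr1 (fun w : ext R => w (bset 3)) h; rewrite /= !mk2_3.
- by have := congr1 (fun w : ext R => w (bset 5)) h; rewrite /= !mk2_5.
- by have := congr1 (fun w : ext R => w (bset 9)) h; rewrite /= !mk2_9.
- by have := congr1 (fun w : ext R => w (bset 6)) h; rewrite /= !mk2_6.
- by have := congr1 (fun w : ext R => w (bset 10)) h; rewrite /= !mk2_10.
- by have := congr1 (fun w : ext R => w (bset 12)) h; rewrite /= !mk2_12.
Qed.

Lemma mk2_0 : mk2 0 0 0 0 0 0 = 0 :> ext R.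
Proof. by rewrite /mk2 !scale0r !addr0. Qed.

Lemma mk3_inj (z7 z11 z13 z14 w7 w11 w13 w14 : R) :
  mk3 z7 z11 z13 z14 = mk3 w7 w11 w13 w14 :> ext R ->
  [/\ z7 = w7, z11 = w11, z13 = w13 & z14 = w14].
Proof.
move=> h; split.
- by have := congr1 (fun w : ext R => w (bset 7)) h; rewrite /= !mk3E //=; rewrite ?mulr1 ?mulr0 ?addr0 ?add0r.
- by have := congr1 (fun w : ext R => w (bset 11)) h; rewrite /= !mk3E //=; rewrite ?mulr1 ?mulr0 ?addr0 ?add0r.
- by have := congr1 (fun w : ext R => w (bset 13)) h; rewrite /= !mk3E //=; rewrite ?mulr1 ?mulr0 ?addr0 ?add0r.
- by have := congr1 (fun w : ext R => w (bset 14)) h; rewrite /= !mk3E //=; rewrite ?mulr1 ?mulr0 ?addr0 ?add0r.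
Qed.

Lemma mk3_0 : mk3 0 0 0 0 = 0 :> ext R.
Proof. by rewrite /mk3 !scale0r !addr0. Qed.

Lemma x1E (r : ext R) : x1 r = r (bset 3). Proof. by rewrite /x1 set12. Qed.
Lemma x2E (r : ext R) : x2 r = r (bset 5). Proof. by rewrite /x2 set13. Qed.
Lemma x3E (r : ext R) : x3 r = r (bset 9). Proof. by rewrite /x3 set14. Qed.
Lemma x4E (r : ext R) : x4 r = r (bset 6). Proof. by rewrite /x4 set23. Qed.
Lemma x5E (r : ext R) : x5 r = r (bset 10). Proof. by rewrite /x5 set24. Qed.
Lemma x6E (r : ext R) : x6 r = r (bset 12). Proof. by rewrite /x6 set34. Qed.

Definition xs := (x1E, x2E, x3E, x4E, x5E, x6E, mk2_3, mk2_5, mk2_9, mk2_6, mk2_10, mk2_12).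

Lemma e12E : e12 R = mk2 1 0 0 0 0 0. Proof. by rewrite /e12 set12 /mk2 !scale0r !addr0 scale1r. Qed.
Lemma e13E : e13 R = mk2 0 1 0 0 0 0. Proof. by rewrite /e13 set13 /mk2 !scale0r !addr0 add0r scale1r. Qed.
Lemma e14E : e14 R = mk2 0 0 1 0 0 0. Proof. by rewrite /e14 set14 /mk2 !scale0r !addr0 !add0r scale1r. Qed.
Lemma e23E : e23 R = mk2 0 0 0 1 0 0. Proof. by rewrite /e23 set23 /mk2 !scale0r !addr0 !add0r scale1r. Qed.
Lemma e34E : e34 R = mk2 0 0 0 0 0 1. Proof. by rewrite /e34 set34 /mk2 !scale0r !add0r scale1r. Qed.

Lemma scale_mk2 (c y1 y2 y3 y4 y5 y6 : R) :
  c *: mk2 y1 y2 y3 y4 y5 y6 = mk2 (c * y1) (c * y2) (c * y3) (c * y4) (c * y5) (c * y6).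
Proof. by rewrite /mk2 !scalerDr !scalerA. Qed.

Lemma evb4 : ev R b4 = \col_k (k == b4)%:R. Proof. by apply/matrixP => i j; rewrite (ord1 j) evE mxE. Qed.

Lemma sch0 (a : ext R) : schouten a 0 = 0.
Proof.
apply/ffunP => U; rewrite schE zeroE big1 // => S _; rewrite big1 // => T _.
by rewrite zeroE mulr0 mul0r.
Qed.

Lemma inv3_0 (w : ext R) : g_invariant 3 w -> w = 0.
Proof.
move=> [hw hv]; rewrite (homog3E hw) in hv *.
move: (w (bset 7)) (w (bset 11)) (w (bset 13)) (w (bset 14)) hv => z1 z2 z3 z4 hv.
have := hv (ev R b4); have := hv (ev R b3); rewrite !inv3E !evE /= -mk3_0.
move=> /mk3_inj[h1 h2 h3 h4] /mk3_inj[h5 h6 h7 h8].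
congr mk3; lra.
Qed.

End P.

Section P.
Variable R : realType.
Lemma mk2_congr (y1 y2 y3 y4 y5 y6 z1 z2 z3 z4 z5 z6 : R) :
  y1 = z1 -> y2 = z2 -> y3 = z3 -> y4 = z4 -> y5 = z5 -> y6 = z6 ->
  mk2 y1 y2 y3 y4 y5 y6 = mk2 z1 z2 z3 z4 z5 z6.
Proof. by move=> -> -> -> -> -> ->. Qed.
Lemma mk3_congr (y1 y2 y3 y4 z1 z2 z3 z4 : R) :
  y1 = z1 -> y2 = z2 -> y3 = z3 -> y4 = z4 -> mk3 y1 y2 y3 y4 = mk3 z1 z2 z3 z4.
Proof. by move=> -> -> -> ->. Qed.
Lemma homog2_ex (w : ext R) : homog 2 w -> exists y1 y2 y3 y4 y5 y6 : R, w = mk2 y1 y2 y3 y4 y5 y6.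
Proof. by move/homog2E => ->; do 6 eexists. Qed.

Lemma inv2E (w : ext R) : g_invariant 2 w <-> exists c : R, w = c *: e12 R.
Proof.
split => [[hw hv]|[c ->]].
  have [y1 [y2 [y3 [y4 [y5 [y6 E]]]]]] := homog2_ex hw; rewrite E in hv *.
  have := hv (ev R b4); have := hv (ev R b3).
  rewrite -/(delta _ (ev R b3)) -/(delta _ (ev R b4)) !deltaE !evE /= -mk2_0.
  move=> /mk2_inj[h1 [h2 [h3 [h4 [h5 h6]]]]] /mk2_inj[h7 [h8 [h9 [h10 [h11 h12]]]]].
  exists y1; rewrite e12E scale_mk2; apply: mk2_congr; lra.
rewrite e12E scale_mk2; split; first exact: homog_mk2.
move=> v; rewrite -/(delta _ v) deltaE -mk2_0; apply: mk2_congr; ring.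
Qed.

Lemma rr_eq0 (r : ext R) : homog 2 r ->
  (schouten r r = 0 <-> [/\ x5 r = 0, x3 r * x4 r = 0 & x3 r * x6 r = 0]).
Proof.
move=> hr; have [y1 [y2 [y3 [y4 [y5 [y6 ->]]]]]] := homog2_ex hr.
rewrite rrE !xs -mk3_0; split.
  move=> /mk3_inj[h1 h2 h3 h4].
  have h5 : y5 = 0.
    by apply/eqP; rewrite -sqrf_eq0; apply/eqP; lra.
  by split => //; rewrite h5 in h1 h3; lra.
by move=> [h5 h34 h36]; rewrite h5; apply: mk3_congr; lra.
Qed.

Lemma rmat_iff (r : ext R) : homog 2 r -> (is_rmatrix r <-> schouten r r = 0).
Proof.
move=> hr; split; first by move=> [_ /inv3_0].
move=> h; split => //; rewrite h; split; first by move=> S _; rewrite zeroE.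
by move=> v; rewrite sch0.
Qed.

Lemma aut_mul (A B : 'M[R]_4) : is_aut A -> is_aut B -> is_aut (A *m B).
Proof.
move=> [uA hA] [uB hB]; split; first by rewrite unitmx_mul uA uB.
by move=> u v; rewrite -[LHS]mulmxA hB (hA (B *m u) (B *m v)) !mulmxA.
Qed.

Lemma aut_inv (A : 'M[R]_4) : is_aut A -> is_aut (invmx A).
Proof.
move=> [uA hA]; split; first by rewrite unitmx_inv.
move=> u v; apply: (can_inj (mulKmx uA)).
by rewrite /= mulKVmx // hA !mulKVmx.
Qed.

Lemma homog_lam2 (T : 'M[R]_4) (w : ext R) : is_aut T -> homog 2 w -> homog 2 (lam2 T w).
Proof.
move=> /aut_form[a [b [q [d [e [f [_ _ ->]]]]]]] hw.
have [y1 [y2 [y3 [y4 [y5 [y6 ->]]]]]] := homog2_ex hw.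
by rewrite lam2E; apply: homog_mk2.
Qed.

Lemma lam2_comp (A B : 'M[R]_4) (w : ext R) : is_aut A -> is_aut B -> homog 2 w ->
  lam2 A (lam2 B w) = lam2 (A *m B) w.
Proof.
move=> /aut_form[a [b [q [d [e [f [_ _ ->]]]]]]].
move=> /aut_form[a' [b' [q' [d' [e' [f' [_ _ ->]]]]]]] hw.
have [y1 [y2 [y3 [y4 [y5 [y6 ->]]]]]] := homog2_ex hw.
rewrite mkTM !lam2E; apply: mk2_congr; ring.
Qed.

Lemma lam2_1 (w : ext R) : homog 2 w -> lam2 1%:M w = w.
Proof.
move=> hw; have [y1 [y2 [y3 [y4 [y5 [y6 ->]]]]]] := homog2_ex hw.
rewrite -mkT1 lam2E; apply: mk2_congr; ring.
Qed.

Lemma lam2_invK (T : 'M[R]_4) (w : ext R) : is_aut T -> homog 2 w ->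
  lam2 (invmx T) (lam2 T w) = w.
Proof.
move=> hT hw; case: (hT) => uT _.
rewrite lam2_comp //; last exact: aut_inv.
by rewrite (mulVmx uT) lam2_1.
Qed.

Lemma natural (T : 'M[R]_4) (w : ext R) (v : gvec R) : is_aut T -> homog 2 w ->
  delta (lam2 T w) (T *m v) = lam2 T (delta w v).
Proof.
move=> /aut_form[a [b [q [d [e [f [_ _ ->]]]]]]] hw.
have [y1 [y2 [y3 [y4 [y5 [y6 ->]]]]]] := homog2_ex hw.
rewrite lam2E !deltaE lam2E !mulmxE4 !mxE /mkTe /=; apply: mk2_congr; ring.
Qed.
End P.

Section Q.
Variable R : realType.

Definition cond (c : orbit_cls) (y1 y2 y3 y4 y6 : R) : Prop :=
  match c with
  | O0 => [/\ y1 = 0, y2 = 0, y3 = 0, y4 = 0 & y6 = 0]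
  | OIp => [/\ 0 < y1, y2 = 0, y3 = 0, y4 = 0 & y6 = 0]
  | OIm => [/\ y1 < 0, y2 = 0, y3 = 0, y4 = 0 & y6 = 0]
  | OII => [/\ y1 = 0, y2 != 0, y3 = 0, y4 = 0 & y6 = 0]
  | OIIIp => [/\ 0 < y1, y2 != 0, y3 = 0, y4 = 0 & y6 = 0]
  | OIIIm => [/\ y1 < 0, y2 != 0, y3 = 0, y4 = 0 & y6 = 0]
  | OIV => [/\ y1 = 0, y3 = 0, y4 != 0 & y6 = 0]
  | OVp => [/\ 0 < y1, y3 = 0, y4 != 0 & y6 = 0]
  | OVm => [/\ y1 < 0, y3 = 0, y4 != 0 & y6 = 0]
  | OVI => [/\ y3 != 0, y4 = 0 & y6 = 0]
  | OVII => [/\ y1 = 0, y3 = 0 & y6 != 0]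
  | OVIIIp => [/\ 0 < y1, y3 = 0 & y6 != 0]
  | OVIIIm => [/\ y1 < 0, y3 = 0 & y6 != 0]
  end.

Lemma inclsE c (y1 y2 y3 y4 y5 y6 : R) :
  in_cls c (mk2 y1 y2 y3 y4 y5 y6) <-> y5 = 0 /\ cond c y1 y2 y3 y4 y6.
Proof.
rewrite /in_cls !xs; split => [[_ [h5 h]]|[h5 h]].
  by split => //; case: c h.
split; first exact: homog_mk2.
by split => //; case: c h.
Qed.

Lemma in_cls_homog c (r : ext R) : in_cls c r -> homog 2 r.
Proof. by case. Qed.

Lemma classify (r : ext R) : is_rmatrix r -> exists c, in_cls c r.
Proof.
move=> h; have hr : homog 2 r by case: h.
move: h; rewrite rmat_iff // rr_eq0 //.
have [y1 [y2 [y3 [y4 [y5 [y6 ->]]]]]] := homog2_ex hr.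
rewrite !xs => -[h5 h34 h36].
suff [c hc] : exists c, cond c y1 y2 y3 y4 y6 by exists c; apply/inclsE.
case: (eqVneq y3 0) => [h3|h3]; last first.
  exists OVI; split => //.
    by move/eqP: h34; rewrite mulf_eq0 (negbTE h3) => /eqP.
  by move/eqP: h36; rewrite mulf_eq0 (negbTE h3) => /eqP.
case: (eqVneq y6 0) => [h6|h6].
  case: (eqVneq y4 0) => [h4|h4].
    case: (eqVneq y2 0) => [h2|h2].
      case: (ltrgtP y1 0) => h1; [exists OIm | exists OIp | exists O0]; by split.
    case: (ltrgtP y1 0) => h1; [exists OIIIm | exists OIIIp | exists OII]; by split.
  case: (ltrgtP y1 0) => h1; [exists OVm | exists OVp | exists OIV]; by split.
case: (ltrgtP y1 0) => h1; [exists OVIIIm | exists OVIIIp | exists OVII]; by split.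
Qed.

Definition canon (c : orbit_cls) : ext R :=
  match c with
  | O0 => mk2 0 0 0 0 0 0
  | OIp => mk2 1 0 0 0 0 0
  | OIm => mk2 (-1) 0 0 0 0 0
  | OII => mk2 0 1 0 0 0 0
  | OIIIp => mk2 1 1 0 0 0 0
  | OIIIm => mk2 (-1) 1 0 0 0 0
  | OIV => mk2 0 0 0 1 0 0
  | OVp => mk2 1 0 0 1 0 0
  | OVm => mk2 (-1) 0 0 1 0 0
  | OVI => mk2 0 0 1 0 0 0
  | OVII => mk2 0 0 0 0 0 1
  | OVIIIp => mk2 1 0 0 0 0 1
  | OVIIIm => mk2 (-1) 0 0 0 0 1
  end.

Lemma canon_in c : in_cls c (canon c).
Proof.
case: c; apply/inclsE; split => //; split => //;
  rewrite ?ltr01 ?oppr_lt0 ?ltr01 ?oner_neq0 //.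
Qed.
End Q.

Section O.
Variable R : realType.

Lemma neq_by (x y : R) : x = y -> y != 0 -> x != 0.
Proof. by move=> ->. Qed.

Lemma orbit_fwd c (r : ext R) T : in_cls c r -> is_aut T -> in_cls c (lam2 T r).
Proof.
move=> hc /aut_form[a [b [q [d [e [f [ha hq ->]]]]]]].
have [y1 [y2 [y3 [y4 [y5 [y6 E]]]]]] := homog2_ex (in_cls_homog hc).
rewrite E in hc *; move/inclsE: hc => [h5 hc]; rewrite lam2E; apply/inclsE.
rewrite h5; split; first ring.
have ha2 : 0 < a ^+ 2 by rewrite exprn_even_gt0 // ha orbT.
have haq : a * q != 0 by rewrite mulf_neq0.
case: c hc => /=.
- by move=> [-> -> -> -> ->]; split; ring.
- move=> [h1 -> -> -> ->]; split; try ring; nra.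
- move=> [h1 -> -> -> ->]; split; try ring; nra.
- move=> [-> h2 -> -> ->]; split; try ring.
  by apply: (neq_by (y := (a * q) * y2)); [ring | rewrite mulf_neq0].
- move=> [h1 h2 -> -> ->]; split; try ring; first nra.
  by apply: (neq_by (y := (a * q) * y2)); [ring | rewrite mulf_neq0].
- move=> [h1 h2 -> -> ->]; split; try ring; first nra.
  by apply: (neq_by (y := (a * q) * y2)); [ring | rewrite mulf_neq0].
- move=> [-> -> h4 ->]; split; try ring.
  by apply: (neq_by (y := (a * q) * y4)); [ring | rewrite mulf_neq0].
- move=> [h1 -> h4 ->]; split; try ring; first nra.
  by apply: (neq_by (y := (a * q) * y4)); [ring | rewrite mulf_neq0].
- move=> [h1 -> h4 ->]; split; try ring; first nra.
  by apply: (neq_by (y := (a * q) * y4)); [ring | rewrite mulf_neq0].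
- move=> [h3 -> ->]; split; try ring.
  by apply: (neq_by (y := a * y3)); [ring | rewrite mulf_neq0].
- move=> [-> -> h6]; split; try ring.
  by apply: (neq_by (y := q * y6)); [ring | rewrite mulf_neq0].
- move=> [h1 -> h6]; split; try ring; first nra.
  by apply: (neq_by (y := q * y6)); [ring | rewrite mulf_neq0].
- move=> [h1 -> h6]; split; try ring; first nra.
  by apply: (neq_by (y := q * y6)); [ring | rewrite mulf_neq0].
Qed.

Lemma sqrt_ne0 (x : R) : 0 < x -> Num.sqrt x != 0.
Proof. by move=> hx; rewrite sqrtr_eq0 -ltNge. Qed.

Ltac side := repeat (match goal with H : is_true (_ != 0) |- _ => rewrite H end); try done.
Ltac fin := apply: mk2_congr; try field; rewrite ?sqr_sqrtr //; try field; try lra.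

Lemma reach c (r : ext R) : in_cls c r -> same_orbit (canon R c) r.
Proof.
move=> hc; have [y1 [y2 [y3 [y4 [y5 [y6 E]]]]]] := homog2_ex (in_cls_homog hc).
rewrite E in hc *; move/inclsE: hc => [-> hc].
case: c hc => /=.
- move=> [-> -> -> -> ->]; exists (mkT 1 0 1 0 0 0); split; first by apply: mkT_aut; rewrite oner_neq0.
  by rewrite lam2E; apply: mk2_congr; ring.
- move=> [h1 -> -> -> ->]; have ha := sqrt_ne0 h1; have hy : 0 <= y1 by apply: ltW.
  exists (mkT (Num.sqrt y1) 0 1 0 0 0); split; first by apply: mkT_aut; rewrite ?oner_neq0.
  rewrite lam2E; apply: mk2_congr; rewrite ?sqr_sqrtr //; field; side.
- move=> [h1 -> -> -> ->]; have h1' : 0 < - y1 by rewrite oppr_gt0.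
  have ha := sqrt_ne0 h1'; have hy : 0 <= - y1 by apply: ltW.
  exists (mkT (Num.sqrt (- y1)) 0 1 0 0 0); split; first by apply: mkT_aut; rewrite ?oner_neq0.
  rewrite lam2E; apply: mk2_congr; rewrite ?sqr_sqrtr //; field; side.
- move=> [-> h2 -> -> ->].
  exists (mkT 1 0 y2 0 0 0); split; first by apply: mkT_aut; rewrite ?oner_neq0.
  rewrite lam2E; apply: mk2_congr; field; side.
- move=> [h1 h2 -> -> ->]; have ha := sqrt_ne0 h1; have hy : 0 <= y1 by apply: ltW.
  exists (mkT (Num.sqrt y1) 0 (y2 / Num.sqrt y1) 0 0 0); split.
    by apply: mkT_aut; rewrite ?mulf_neq0 ?invr_neq0.
  rewrite lam2E; apply: mk2_congr; rewrite ?sqr_sqrtr //; field; side.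
- move=> [h1 h2 -> -> ->]; have h1' : 0 < - y1 by rewrite oppr_gt0.
  have ha := sqrt_ne0 h1'; have hy : 0 <= - y1 by apply: ltW.
  exists (mkT (Num.sqrt (- y1)) 0 (y2 / Num.sqrt (- y1)) 0 0 0); split.
    by apply: mkT_aut; rewrite ?mulf_neq0 ?invr_neq0.
  rewrite lam2E; apply: mk2_congr; rewrite ?sqr_sqrtr //; field; side.
- move=> [-> -> h4 ->].
  exists (mkT 1 (y2 / y4) y4 0 0 0); split; first by apply: mkT_aut; rewrite ?oner_neq0.
  rewrite lam2E; apply: mk2_congr; field; side.
- move=> [h1 -> h4 ->]; have ha := sqrt_ne0 h1; have hy : 0 <= y1 by apply: ltW.
  exists (mkT (Num.sqrt y1) (y2 * Num.sqrt y1 / y4) (y4 / Num.sqrt y1) 0 0 0); split.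
    by apply: mkT_aut; rewrite ?mulf_neq0 ?invr_neq0.
  rewrite lam2E; apply: mk2_congr; rewrite ?sqr_sqrtr //; field; side.
- move=> [h1 -> h4 ->]; have h1' : 0 < - y1 by rewrite oppr_gt0.
  have ha := sqrt_ne0 h1'; have hy : 0 <= - y1 by apply: ltW.
  exists (mkT (Num.sqrt (- y1)) (y2 * Num.sqrt (- y1) / y4) (y4 / Num.sqrt (- y1)) 0 0 0); split.
    by apply: mkT_aut; rewrite ?mulf_neq0 ?invr_neq0.
  rewrite lam2E; apply: mk2_congr; rewrite ?sqr_sqrtr //; field; side.
- move=> [h3 -> ->].
  exists (mkT y3 0 1 0 (y1 / y3) (y2 / y3)); split; first by apply: mkT_aut; rewrite ?oner_neq0.
  rewrite lam2E; apply: mk2_congr; field; side.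
- move=> [-> -> h6].
  exists (mkT 1 0 y6 (- y2 / y6) (- y4 / y6) 0); split; first by apply: mkT_aut; rewrite ?oner_neq0.
  rewrite lam2E; apply: mk2_congr; field; side.
- move=> [h1 -> h6]; have ha := sqrt_ne0 h1; have hy : 0 <= y1 by apply: ltW.
  exists (mkT (Num.sqrt y1) 0 y6 (- y2 / y6) (- y4 / y6) 0); split.
    by apply: mkT_aut.
  rewrite lam2E; apply: mk2_congr; rewrite ?sqr_sqrtr //; field; side.
- move=> [h1 -> h6]; have h1' : 0 < - y1 by rewrite oppr_gt0.
  have ha := sqrt_ne0 h1'; have hy : 0 <= - y1 by apply: ltW.
  exists (mkT (Num.sqrt (- y1)) 0 y6 (- y2 / y6) (- y4 / y6) 0); split.
    by apply: mkT_aut.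
  rewrite lam2E; apply: mk2_congr; rewrite ?sqr_sqrtr //; field; side.
Qed.
End O.

Section E.
Variable R : realType.

Lemma orbit_iff c (r r' : ext R) : in_cls c r -> (same_orbit r r' <-> in_cls c r').
Proof.
move=> hc; split => [[T [hT ->]]|hc']; first exact: orbit_fwd.
have [T1 [h1 E1]] := reach hc; have [T2 [h2 E2]] := reach hc'.
have hC := in_cls_homog (canon_in R c).
exists (T2 *m invmx T1); split; first by apply: aut_mul => //; apply: aut_inv.
have hr := in_cls_homog hc.
by rewrite -(lam2_comp h2 (aut_inv h1) hr) E2 E1 lam2_invK.
Qed.

Lemma homog_delta (w : ext R) v : homog 2 w -> homog 2 (delta w v).
Proof.
by move=> hw; have [y1 [y2 [y3 [y4 [y5 [y6 ->]]]]]] := homog2_ex hw; rewrite deltaE; apply: homog_mk2.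
Qed.

Definition repm (k : coc_cls) : ext R :=
  match k with
  | C0 => mk2 0 0 0 0 0 0
  | CII => mk2 0 1 0 0 0 0
  | CIV => mk2 0 0 0 1 0 0
  | CVI => mk2 0 0 1 0 0 0
  | CVII => mk2 0 0 0 0 0 1
  end.

Lemma repE k : rep R k = repm k.
Proof. by case: k; rewrite /= ?mk2_0 ?e13E ?e23E ?e14E ?e34E. Qed.

Lemma equiv_cls c (r : ext R) : in_cls c r -> equiv_coc (delta r) (delta (rep R (grp c))).
Proof.
move=> hc; have [T0 [h0 E0]] := reach hc.
have hC := in_cls_homog (canon_in R c).
exists (invmx T0); split; first exact: aut_inv.
move=> v; rewrite invmxK E0 natural // lam2_invK //; last exact: homog_delta.
rewrite repE; case: c {hc E0 hC} => /=; rewrite !deltaE; apply: mk2_congr; ring.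
Qed.

Lemma nonequiv k k' : k <> k' -> ~ equiv_coc (delta (rep R k)) (delta (rep R k')).
Proof.
move=> hk [T [hT hv]].
have [uT _] := hT.
have hr : homog 2 (rep R k) by rewrite repE; case: k {hk hv} => /=; apply: homog_mk2.
have key w : delta (rep R k') (T *m w) = delta (lam2 T (rep R k)) (T *m w).
  by rewrite hv mulKmx // natural.
have e4 := key (invmx T *m ev R b4); have e3 := key (invmx T *m ev R b3).
rewrite !mulKVmx // in e4 e3.
have [a [b [q [d [e [f [ha hq ET]]]]]]] := aut_form hT.
have haq : a * q != 0 by rewrite mulf_neq0.
rewrite ET !repE in e4 e3.
clear -ha hq haq e4 e3 hk.
case: k k' hk e4 e3 => -[] // _; rewrite /= !lam2E !deltaE !evE /= => 
  /mk2_inj[h1 [h2 [h3 [h4 [h5 h6]]]]] /mk2_inj[h7 [h8 [h9 [h10 [h11 h12]]]]].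
all: first [ lra | (apply: (negP ha); apply/eqP; nra) | (apply: (negP hq); apply/eqP; nra)
           | (apply: (negP haq); apply/eqP; nra) ].
Qed.
End E.


Unset Implicit Arguments.

Theorem mainTheorem13 (R : realType) :
  (* (Lambda^3 s1)^{s1} = 0 *)
  (forall w : ext R, g_invariant 3 w -> w = 0) /\
  (* (Lambda^2 s1)^{s1} = <e12> *)
  (forall w : ext R, g_invariant 2 w <-> exists c : R, w = c *: e12 R) /\
  (* r-matrices = CYBE solutions = {x5 = 0, x3 x4 = 0, x3 x6 = 0} *)
  (forall r : ext R, homog 2 r ->
     (is_rmatrix r <-> schouten r r = 0) /\
     (schouten r r = 0 <-> [/\ x5 r = 0, x3 r * x4 r = 0 & x3 r * x6 r = 0])) /\
  (* the orbits of Aut(s1) on the set of r-matrices are exactly the listed sets *)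
  (forall r : ext R, is_rmatrix r -> exists c, in_cls c r) /\
  (forall c, exists r : ext R, in_cls c r) /\
  (forall c (r r' : ext R), in_cls c r -> (same_orbit r r' <-> in_cls c r')) /\
  (* five classes of coboundary cocommutators with the given representatives *)
  (forall c (r : ext R), in_cls c r -> equiv_coc (delta r) (delta (rep R (grp c)))) /\
  (forall k k' : coc_cls, k <> k' ->
     ~ equiv_coc (delta (rep R k)) (delta (rep R k'))).
Proof.
split; first exact: inv3_0.
split; first exact: inv2E.
split; first by move=> r hr; split; [exact: rmat_iff | exact: rr_eq0].
split; first exact: classify.
split; first by move=> c; exists (canon R c); exact: canon_in.
split; first by move=> c r r'; exact: orbit_iff.
split; first by move=> c r; exact: equiv_cls.
exact: nonequiv.
Qed.
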